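(* Let $L$ be a Leibniz algebra over $F$ and $(l,r,V)$ any representation of $L$. Then the restriction of $r$ to the ideal $\{\mathrm{Rad}(L),L\}$ is nilpotent, i.e. there exists an integer $m\ge1$ with $(r_{\{\mathrm{Rad}(L),L\}})^m=\{0\}$.
   Context: $F$ is an algebraically closed field of characteristic zero; all spaces are finite-dimensional. A (right) Leibniz algebra is a vector space $L$ with bilinear bracket satisfying $[x,[y,z]]=[[x,y],z]-[[x,z],y]$. A representation $(l,r,V)$ of $L$ is a vector space $V$ with linear maps $l,r:L\to\mathrm{End}_F(V)$ such that $r_{[x,y]}=r_yr_x-r_xr_y$, $l_{[x,y]}=r_yl_x-l_xr_y$, $l_{[x,y]}=r_yl_x+l_xl_y$ (products are compositions). For a subspace $B\subseteq L$, $r_B=\{r_b:b\in B\}$ and $(r_B)^p$ is the span of all compositions $r_{b_1}\cdots r_{b_p}$, $b_i\in B$. For subspaces $X,Y$, $[X,Y]$ is the span of $[u,v]$, $u\in X$, $v\in Y$. Derived series: $D^1(L)=[L,L]$, $D^{n+1}(L)=[D^n(L),D^n(L)]$; $L$ is solvable if some $D^m(L)=0$. $\mathrm{Rad}(L)$ is the largest solvable two-sided ideal of $L$, and $\{\mathrm{Rad}(L),L\}=[\mathrm{Rad}(L),L]+[L,\mathrm{Rad}(L)]$. *)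

(* Defs.v *)
From HB Require Import structures.
From mathcomp Require Import all_boot all_order all_algebra.
Set Implicit Arguments. Unset Strict Implicit. Unset Printing Implicit Defensive.
Import GRing.Theory.
Local Open Scope ring_scope.

(* Right Leibniz algebra: a finite-dimensional F-vector space L (vectType)
   with a bilinear bracket br satisfying [x,[y,z]] = [[x,y],z] - [[x,z],y]. *)
Definition is_leibniz (F : fieldType) (L : vectType F) (br : L -> L -> L) :=
  [/\ (forall (a : F) (x y z : L), br (a *: x + y) z = a *: br x z + br y z),
      (forall (a : F) (x y z : L), br z (a *: x + y) = a *: br z x + br z y) &
      (forall x y z : L, br x (br y z) = br (br x y) z - br (br x z) y)].

(* [X, Y] : span of all [u, v], u in X, v in Y (by bilinearity it suffices
   to take u, v in bases of X and Y). *)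
Definition brspace (F : fieldType) (L : vectType F) (br : L -> L -> L)
    (X Y : {vspace L}) : {vspace L} :=
  <<[seq br u v | u <- vbasis X, v <- vbasis Y]>>%VS.

Fixpoint derived (F : fieldType) (L : vectType F) (br : L -> L -> L)
    (I : {vspace L}) (n : nat) : {vspace L} :=
  if n is n'.+1 then brspace br (derived br I n') (derived br I n') else I.

Definition solvable_sp (F : fieldType) (L : vectType F) (br : L -> L -> L)
    (I : {vspace L}) := exists m : nat, derived br I m = 0%VS.

Definition is_ideal (F : fieldType) (L : vectType F) (br : L -> L -> L)
    (I : {vspace L}) :=
  (brspace br I fullv <= I)%VS /\ (brspace br fullv I <= I)%VS.

Definition is_radical (F : fieldType) (L : vectType F) (br : L -> L -> L)
    (R : {vspace L}) :=
  [/\ is_ideal br R, solvable_sp br R &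
      forall I : {vspace L}, is_ideal br I -> solvable_sp br I -> (I <= R)%VS].

Definition is_rep (F : fieldType) (L : vectType F) (br : L -> L -> L)
    (V : vectType F) (l r : L -> V -> V) :=
  [/\ (forall (a : F) (x y : L) (v : V), l (a *: x + y) v = a *: l x v + l y v),
      (forall (a : F) (x y : L) (v : V), r (a *: x + y) v = a *: r x v + r y v),
      (forall (x : L) (a : F) (u w : V), l x (a *: u + w) = a *: l x u + l x w) &
      (forall (x : L) (a : F) (u w : V), r x (a *: u + w) = a *: r x u + r x w)] /\
  [/\ (forall (x y : L) (v : V), r (br x y) v = r y (r x v) - r x (r y v)),
      (forall (x y : L) (v : V), l (br x y) v = r y (l x v) - l x (r y v)) &
      (forall (x y : L) (v : V), l (br x y) v = r y (l x v) + l x (l y v))].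

Definition rcomp (F : fieldType) (L : vectType F) (V : vectType F)
    (r : L -> V -> V) (s : seq L) : V -> V :=
  foldr (fun b f => r b \o f) id s.

(* (r_B)^m = {0}: every composition of m operators r_b, b in B, vanishes *)
Definition rpow_zero (F : fieldType) (L : vectType F) (V : vectType F)
    (r : L -> V -> V) (B : {vspace L}) (m : nat) :=
  forall s : seq L, size s = m -> all (fun b => b \in B) s ->
    forall v : V, rcomp r s v = 0.

(* Main.v *)
Require Import Defs.
From HB Require Import structures.
From mathcomp Require Import all_boot all_order all_algebra.
Set Implicit Arguments. Unset Strict Implicit. Unset Printing Implicit Defensive.
Import GRing.Theory.
Local Open Scope ring_scope.


Section Span.
Variable F : fieldType.

Lemma span_ind (V : vectType F) (P : V -> Prop) (X : seq V) :
  P 0 -> (forall a x y, P x -> P y -> P (a *: x + y)) ->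
  (forall x, x \in X -> P x) -> forall v, v \in <<X>>%VS -> P v.
Proof.
move=> P0 Pc PX v Xv.
have := coord_span (X := in_tuple X) Xv => ->.
apply: (big_ind P) => //.
  by move=> x y Px Py; rewrite -[x]scale1r; apply: Pc.
move=> i _; rewrite -[_ *: _]addr0; apply: Pc => //; apply: PX.
by apply: mem_nth; rewrite ?size_tuple.
Qed.

Lemma vspace_ind (V : vectType F) (P : V -> Prop) (U : {vspace V}) :
  P 0 -> (forall a x y, P x -> P y -> P (a *: x + y)) ->
  (forall x, x \in (vbasis U : seq V) -> P x) -> forall v, v \in U -> P v.
Proof.
move=> P0 Pc PX v Uv.
rewrite (coord_vbasis Uv).
apply: (big_ind P) => //.
  by move=> x y Px Py; rewrite -[x]scale1r; apply: Pc.
move=> i _; rewrite -[_ *: _]addr0; apply: Pc => //; apply: PX.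
by apply: mem_nth; rewrite ?size_tuple.
Qed.

Definition bilin (U1 U2 W : vectType F) (f : U1 -> U2 -> W) :=
  (forall (a : F) x y z, f (a *: x + y) z = a *: f x z + f y z) /\
  (forall (a : F) x y z, f z (a *: x + y) = a *: f z x + f z y).

Lemma bilin0l (U1 U2 W : vectType F) (f : U1 -> U2 -> W) : bilin f ->
  forall z, f 0 z = 0.
Proof.
case=> fl _ z; have := fl (-1) 0 0 z.
by rewrite scaler0 addr0 scaleN1r addNr.
Qed.

Lemma bilin0r (U1 U2 W : vectType F) (f : U1 -> U2 -> W) : bilin f ->
  forall z, f z 0 = 0.
Proof.
case=> _ fr z; have := fr (-1) 0 0 z.
by rewrite scaler0 addr0 scaleN1r addNr.
Qed.

Lemma bil_span (U1 U2 W : vectType F) (f : U1 -> U2 -> W) (X : {vspace U1})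
  (Y : {vspace U2}) x y : bilin f -> x \in X -> y \in Y ->
  f x y \in <<[seq f u v | u <- (vbasis X : seq U1), v <- (vbasis Y : seq U2)]>>%VS.
Proof.
move=> fb Xx Yy; move: x Xx y Yy.
apply: (vspace_ind (P := fun x => forall y, y \in Y -> f x y \in _)).
- by move=> y _; rewrite (bilin0l fb) mem0v.
- move=> a x1 x2 H1 H2 y Yy; rewrite fb.1.
  by apply: memvD; [apply: memvZ; apply: H1|apply: H2].
move=> u Bu; apply: vspace_ind.
- by rewrite (bilin0r fb) mem0v.
- move=> a y1 y2 H1 H2; rewrite fb.2.
  by apply: memvD; [apply: memvZ|].
by move=> v Bv; apply: memv_span; apply: allpairs_f.
Qed.

Lemma brspace_mem (L : vectType F) (br : L -> L -> L) (X Y : {vspace L}) x y :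
  bilin br -> x \in X -> y \in Y -> br x y \in brspace br X Y.
Proof. exact: bil_span. Qed.

Lemma brspace_ind (L : vectType F) (br : L -> L -> L) (X Y : {vspace L}) (P : L -> Prop) :
  P 0 -> (forall a x y, P x -> P y -> P (a *: x + y)) ->
  (forall x y, x \in X -> y \in Y -> P (br x y)) ->
  forall v, v \in brspace br X Y -> P v.
Proof.
move=> P0 Pc Pg; apply: span_ind => // z /allpairsP [[u v] [/= Hu Hv ->]].
by apply: Pg; apply: vbasis_mem.
Qed.

End Span.


Section Mx.
Variable F : closedFieldType.

Lemma eig_pow n (N : 'M[F]_n) (v : 'rV_n) z k :
  v *m N = z *: v -> v *m N ^+ k = z ^+ k *: v.
Proof.
move=> vN; elim: k => [|k IH]; first by rewrite !expr0 mulmx1 scale1r.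
by rewrite exprS -mulmxE mulmxA vN -scalemxAl IH scalerA -exprS.
Qed.

Lemma tr_nil r (N : 'M[F]_r) k : N ^+ k = 0 -> \tr N = 0.
Proof.
case: r N => [|r] N Nk; first by rewrite /mxtrace big_ord0.
have [s Hs] := closed_field_poly_normal (char_poly N).
rewrite (monicP (char_poly_monic N)) scale1r in Hs.
have Hz: forall z, z \in s -> z = 0.
  move=> z zs; have : root (char_poly N) z by rewrite Hs root_prod_XsubC.
  rewrite -eigenvalue_root_char => /eigenvalueP [v vN vnz].
  have := eig_pow k vN; rewrite Nk mulmx0 => /esym/eqP.
  by rewrite scaler_eq0 (negbTE vnz) orbF expf_eq0 => /andP[_ /eqP].
have HX : \prod_(z <- s) ('X - z%:P) = 'X^(size s) :> {poly F}.
  elim: s Hz {Hs} => [|a s IH] Hz; first by rewrite big_nil expr0.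
  rewrite big_cons IH; last by move=> z zs; apply: Hz; rewrite in_cons zs orbT.
  by rewrite (Hz a) ?mem_head // subr0 exprS.
rewrite HX in Hs.
have := size_char_poly N; rewrite Hs size_polyXn => -[Es].
have := char_poly_trace N (ltn0Sn r); rewrite Hs Es coefXn /=.
move=> H; apply/eqP; rewrite -oppr_eq0 -H /=.
by rewrite (ltn_eqF (ltnSn r)).
Qed.

Lemma stableP n m (U : 'M[F]_(m, n)) M :
  (forall v : 'rV_n, (v <= U)%MS -> (v *m M <= U)%MS) -> stablemx U M.
Proof. by move=> H; apply/row_subP => i; rewrite row_mul; apply: H; apply: row_sub. Qed.

Lemma stable_vec n m (U : 'M[F]_(m, n)) M (v : 'rV_n) :
  stablemx U M -> (v <= U)%MS -> (v *m M <= U)%MS.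
Proof. by move=> sU vU; apply: submx_trans sU; apply: submxMr. Qed.

Lemma eigvec n (W M : 'M[F]_n) : W != 0 -> stablemx W M ->
  exists v : 'rV_n, [/\ v != 0, (v <= W)%MS & exists c, v *m M = c *: v].
Proof.
move=> Wnz sWM.
set B := row_base W; set Mr := conjmx B M.
have rW : (0 < \rank W)%N by rewrite lt0n mxrank_eq0.
have : size (char_poly Mr) != 1%N by rewrite size_char_poly -(prednK rW).
move=> /closed_rootP [c]; rewrite -eigenvalue_root_char => /eigenvalueP [u uM unz].
exists (u *m B); split.
- by rewrite mulmx_free_eq0 // row_base_free.
- by apply: submx_trans (submxMl _ _) _; rewrite eq_row_base.
exists c; have sB : (B *m M <= B)%MS by rewrite stablemx_row_base.
by rewrite -mulmxA -(mulmxKpV sB) mulmxA -/(conjmx B M) -/Mr uM scalemxAl.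
Qed.

Lemma comm_family n (xs : seq 'M[F]_n) (U : 'M_n) : U != 0 ->
  (forall x, x \in xs -> stablemx U x) ->
  (forall x y (v : 'rV_n), x \in xs -> y \in xs -> (v <= U)%MS ->
      v *m x *m y = v *m y *m x) ->
  exists v : 'rV_n, [/\ v != 0, (v <= U)%MS &
     forall x, x \in xs -> exists c, v *m x = c *: v].
Proof.
elim: xs U => [|x xs IH] U Unz Hs Hc.
  by exists (nz_row U); split => //; rewrite ?nz_row_eq0 ?nz_row_sub.
have [v [vnz vU [c vx]]] := eigvec Unz (Hs x (mem_head _ _)).
set U' := (U :&: kermx (x - c%:M))%MS.
have U'P : forall u : 'rV_n, (u <= U')%MS = (u <= U)%MS && (u *m x == c *: u).
  move=> u; rewrite sub_capmx sub_kermx mulmxBr mul_mx_scalar subr_eq0 //.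
have vU' : (v <= U')%MS by rewrite U'P vU vx eqxx.
have U'nz : U' != 0.
  by apply: contraNneq vnz => U'0; rewrite -submx0 -U'0.
have inC : forall z, z \in xs -> z \in x :: xs by move=> z zs; rewrite in_cons zs orbT.
have [y yxs|y z u yxs zxs|w [wnz wU' Hw]] := IH U' U'nz.
- apply: stableP => u; rewrite !U'P => /andP [uU /eqP ux].
  rewrite (stable_vec (Hs _ (inC _ yxs)) uU) /=.
  rewrite -Hc ?mem_head ?inC // ux -scalemxAl //.
- by rewrite U'P => /andP [uU _]; apply: Hc; rewrite ?inC.
exists w; split => //; first by move: wU'; rewrite U'P => /andP[].
move=> z; rewrite in_cons => /orP [/eqP ->|/Hw //].
by exists c; move: wU'; rewrite U'P => /andP [_ /eqP].
Qed.

End Mx.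


Section Mx3.
Variable F : closedFieldType.
Hypothesis char0 : [pchar F] =i pred0.

Definition comm n (a b : 'M[F]_n) := a *m b - b *m a.

Lemma comm_bilin n : bilin (@comm n).
Proof.
split=> a x y z; rewrite /comm.
  by rewrite mulmxDl mulmxDr -!scalemxAl -scalemxAr scalerBr addrACA opprD.
by rewrite mulmxDl mulmxDr -!scalemxAl -scalemxAr scalerBr addrACA opprD.
Qed.

Lemma conj_stable m n (B : 'M[F]_(m, n)) X Y :
  stablemx B X -> stablemx B Y -> stablemx B (X *m Y).
Proof. by move=> sX sY; rewrite mulmxA; apply: submx_trans (submxMr _ sX) sY. Qed.

Lemma conj_pow n (U : 'M[F]_n) Z k : stablemx (row_base U) Z ->
  conjmx (row_base U) (Z ^+ k) = (conjmx (row_base U) Z) ^+ k.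
Proof.
move=> sZ; elim: k => [|k IH].
  by rewrite !expr0 conjmx_scalar ?row_base_free.
have sZk : forall j, stablemx (row_base U) (Z ^+ j).
  elim=> [|j IHj]; first by rewrite expr0 mulmx1.
  by rewrite exprS -mulmxE conj_stable.
by rewrite !exprS -!mulmxE conjmxM ?inE // IH.
Qed.

Lemma stable_add m n (B : 'M[F]_(m, n)) X Y :
  stablemx B X -> stablemx B Y -> stablemx B (X + Y).
Proof. by move=> sX sY; rewrite mulmxDr; apply: addmx_sub. Qed.

Lemma stable_scale m n (B : 'M[F]_(m, n)) a X :
  stablemx B X -> stablemx B (a *: X).
Proof. by move=> sX; rewrite -scalemxAr; apply: scalemx_sub. Qed.

Lemma stable_opp m n (B : 'M[F]_(m, n)) X : stablemx B X -> stablemx B (- X).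
Proof. by move=> sX; rewrite -scaleN1r; apply: stable_scale. Qed.

Lemma stable_sub m n (B : 'M[F]_(m, n)) X Y :
  stablemx B X -> stablemx B Y -> stablemx B (X - Y).
Proof. by move=> sX sY; apply: stable_add => //; apply: stable_opp. Qed.

Lemma stable_scalar m n (B : 'M[F]_(m, n)) a : stablemx B (a%:M).
Proof. by rewrite mul_mx_scalar; apply: scalemx_sub. Qed.

Lemma stable_comm m n (B : 'M[F]_(m, n)) X Y :
  stablemx B X -> stablemx B Y -> stablemx B (comm X Y).
Proof. by move=> sX sY; apply: stable_sub; apply: conj_stable. Qed.

Lemma tr_arg n (U : 'M[F]_n) X Y mu m : U != 0 -> stablemx U X -> stablemx U Y ->
  U *m (comm X Y - mu%:M) ^+ m = 0 -> mu = 0.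
Proof.
move=> Unz sX sY Um.
set B := row_base U.
have sXB : stablemx B X by rewrite stablemx_row_base.
have sYB : stablemx B Y by rewrite stablemx_row_base.
have rU : (0 < \rank U)%N by rewrite lt0n mxrank_eq0.
have sC : stablemx B (comm X Y - mu%:M).
  by apply: stable_sub; [apply: stable_comm|apply: stable_scalar].
have rf := row_base_free U.
have E1 : conjmx B (comm X Y - mu%:M) = comm (conjmx B X) (conjmx B Y) - mu%:M.
  by rewrite /comm /conjmx !mulmxBr !mulmxBl -!/(conjmx B _) -conjmxM ?inE //
     -conjmxM ?inE // -/(conjmx B mu%:M) conjmx_scalar.
have E2 : (conjmx B (comm X Y - mu%:M)) ^+ m = 0.
  rewrite -conj_pow //.
  have : (B <= U)%MS by rewrite eq_row_base.
  case/submxP => D DB.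
  have BZ : B *m (comm X Y - mu%:M) ^+ m = 0 by rewrite DB -mulmxA Um mulmx0.
  by rewrite /conjmx BZ mul0mx.
have := tr_nil E2; rewrite E1 /comm !raddfB /= mxtrace_mulC subrr sub0r.
rewrite mxtrace_scalar => /eqP; rewrite oppr_eq0 -mulr_natr mulf_eq0 => /orP[/eqP//|].
by move/pcharf0P: char0 => ->; rewrite eqn0Ngt rU.
Qed.
Definition lam n (v : 'rV[F]_n) (M : 'M_n) : F :=
  if [pick j | v 0 j != 0] is Some j then (v *m M) 0 j / v 0 j else 0.

Lemma lam_eq n (v : 'rV[F]_n) M c : v != 0 -> v *m M = c *: v -> lam v M = c.
Proof.
move=> vnz vM; rewrite /lam; case: pickP => [j vj|H].
  by rewrite vM mxE mulfK.
case/eqP: vnz; apply/matrixP => i j; rewrite ord1 !mxE.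
by have := H j => /negbFE/eqP.
Qed.

Lemma inv_core n (K : {vspace 'M[F]_n}) (x : 'M_n) (w : 'rV_n) :
  w != 0 -> (forall k, k \in K -> comm x k \in K) ->
  (forall k, k \in K -> w *m k = lam w k *: w) ->
  forall k, k \in K -> lam w (comm x k) = 0.
Proof.
case: n K x w => [|n] K x w wnz Kx Kw.
  by rewrite thinmx0 eqxx in wnz.
set lm := lam w.
pose Uf i := (\sum_(j < i) <<w *m x ^+ j>>)%MS.
pose e i k := w *m x ^+ i *m (k - (lm k)%:M).
have Ugen : forall j i, (j < i)%N -> (w *m x ^+ j <= Uf i)%MS.
  by move=> j i ji; rewrite /Uf; apply: (sumsmx_sup (Ordinal ji)) => //; rewrite genmxE.
have US : forall i, Uf i.+1 = (Uf i + <<w *m x ^+ i>>)%MS.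
  by move=> i; rewrite /Uf big_ord_recr.
have Umono : forall i, (Uf i <= Uf i.+1)%MS by move=> i; rewrite US addsmxSl.
have Umono2 : forall i j, (i <= j)%N -> (Uf i <= Uf j)%MS.
  move=> i j /subnK <-; elim: (j - i)%N => [|d IH] //.
  by rewrite addSn; exact: submx_trans IH (Umono _).
have Ux : forall i, (Uf i *m x <= Uf i.+1)%MS.
  move=> i; rewrite {1}/Uf sumsmxMr; apply/sumsmx_subP => j _.
  by rewrite (eqmxMr _ (genmxE _)) -mulmxA mulmxE -exprSr; apply: Ugen; rewrite ltnS.
have Ekey : forall i k, e i.+1 k =
    e i k *m x + e i (comm x k) + lm (comm x k) *: (w *m x ^+ i).
  move=> i k; rewrite /e /comm exprSr -mulmxE mulmxA.
  set y := w *m x ^+ i.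
  rewrite !mulmxBr !mul_mx_scalar mulmxBl -scalemxAl !mulmxA.
  by rewrite -[RHS]addrA subrK [RHS]addrC [RHS]addrA subrK.
have A : forall i k, k \in K -> (e i k <= Uf i)%MS.
  elim=> [|i IH] k kK.
    by rewrite /e expr0 mulmx1 mulmxBr mul_mx_scalar -Kw // subrr sub0mx.
  rewrite Ekey; apply: addmx_sub; first apply: addmx_sub.
  - exact: submx_trans (submxMr _ (IH _ kK)) (Ux i).
  - exact: submx_trans (IH _ (Kx _ kK)) (Umono i).
  - by apply: scalemx_sub; apply: Ugen.
have Uk : forall i k, k \in K -> (Uf i.+1 *m (k - (lm k)%:M) <= Uf i)%MS.
  move=> i k kK; rewrite {1}/Uf sumsmxMr; apply/sumsmx_subP => j _.
  rewrite (eqmxMr _ (genmxE _)).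
  by apply: submx_trans (A _ _ kK) _; apply: Umono2; rewrite -ltnS.
have Upow : forall i k, k \in K -> Uf i *m (k - (lm k)%:M) ^+ i = 0.
  elim=> [|i IH] k kK; first by rewrite /Uf big_ord0 mul0mx.
  apply/eqP; rewrite -submx0 exprS -mulmxE mulmxA.
  by rewrite -(IH k kK); apply: submxMr; apply: Uk.
have CH : (w *m x ^+ n.+1 <= Uf n.+1)%MS.
  have := Cayley_Hamilton x.
  have pm := char_poly_monic x.
  move: pm; set p := char_poly x => pm.
  have sp : size p = n.+2 by rewrite size_char_poly.
  rewrite -[p in horner_mx _ p]coefK poly_def rmorph_sum /= sp big_ord_recr /=.
  have -> : p`_n.+1 = 1 by move/monicP: pm; rewrite lead_coefE sp.
  rewrite horner_mxZ rmorphXn /= horner_mx_X scale1r => /eqP.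
  rewrite addrC addr_eq0 => /eqP ->.
  rewrite mulmxN -scaleN1r; apply: scalemx_sub.
  rewrite mulmx_sumr; apply: summx_sub => i _.
  rewrite horner_mxZ rmorphXn /= horner_mx_X -scalemxAr; apply: scalemx_sub.
  exact: Ugen.
have Ustab : stablemx (Uf n.+1) x.
  by apply: submx_trans (Ux _) _; rewrite US addsmx_sub submx_refl genmxE CH.
have Ustk : forall k, k \in K -> stablemx (Uf n.+1) k.
  move=> k kK; have -> : k = (k - (lm k)%:M) + (lm k)%:M by rewrite subrK.
  apply: stable_add; last exact: stable_scalar.
  exact: submx_trans (Uk _ _ kK) (Umono _).
move=> k kK.
have U0 : Uf n.+1 != 0.
  apply: contraNneq wnz => U0; rewrite -submx0 -U0.
  by have := Ugen 0%N n.+1 isT; rewrite expr0 mulmx1.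
by apply: (tr_arg U0 Ustab (Ustk _ kK)); apply: Upow; apply: Kx.
Qed.

End Mx3.


Section Gen.
Variable F : fieldType.

Lemma brspace_sub (L : vectType F) (br : L -> L -> L) (X Y Z : {vspace L}) :
  (forall x y, x \in X -> y \in Y -> br x y \in Z) -> (brspace br X Y <= Z)%VS.
Proof.
move=> H; apply/span_subvP => z /allpairsP [[u v] [/= Hu Hv ->]].
by apply: H; apply: vbasis_mem.
Qed.

Lemma derived_shift (L : vectType F) (br : L -> L -> L) (S : {vspace L}) k :
  derived br (derived br S 1) k = derived br S k.+1.
Proof. by elim: k => [|k IH] //=; rewrite IH. Qed.

Lemma derived_sub (L : vectType F) (br : L -> L -> L) (S : {vspace L}) :
  (forall x y, x \in S -> y \in S -> br x y \in S) ->
  forall k, (derived br S k <= S)%VS.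
Proof.
move=> H; elim=> [|k IH] /=; first exact: subvv.
apply: brspace_sub => x y Hx Hy; apply: H; exact: (subvP IH).
Qed.

Lemma in_vbasis (L : vectType F) (D : {vspace L}) x :
  x \in (vbasis D : seq L) -> exists i : 'I_(\dim D), x = (vbasis D)`_i.
Proof.
move=> xD; have ix : (index x (vbasis D) < \dim D)%N.
  by rewrite -{2}(size_tuple (vbasis D)) index_mem.
by exists (Ordinal ix); rewrite /= nth_index.
Qed.

End Gen.

Section Lie.
Variable F : closedFieldType.
Hypothesis char0 : [pchar F] =i pred0.

Lemma kill_rows n m p (U : 'M[F]_(m, n)) (Z : 'M_(n, p)) :
  (forall u : 'rV_n, (u <= U)%MS -> u *m Z = 0) -> U *m Z = 0.
Proof.
move=> H; apply/eqP; rewrite -submx0; apply/row_subP => i.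
by rewrite row_mul H ?row_sub // sub0mx.
Qed.

Lemma lam0 n (w : 'rV[F]_n) : w != 0 -> lam w 0 = 0.
Proof. by move=> wnz; apply: lam_eq; rewrite // mulmx0 scale0r. Qed.

Lemma lie n k (S : {vspace 'M[F]_n}) (W : 'M_n) :
  (forall a b, a \in S -> b \in S -> comm a b \in S) ->
  derived (@comm F n) S k = 0%VS -> W != 0 ->
  (forall s, s \in S -> stablemx W s) ->
  exists w : 'rV_n, [/\ w != 0, (w <= W)%MS &
     forall s, s \in S -> w *m s = lam w s *: w].
Proof.
elim: k S => [|k IH] S Sc Sk Wnz Ws.
  exists (nz_row W); split; rewrite ?nz_row_eq0 ?nz_row_sub //.
  move=> s; rewrite /= in Sk; rewrite Sk memv0 => /eqP ->.
  by rewrite mulmx0 lam0 ?scale0r ?nz_row_eq0.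
set D := brspace (@comm F n) S S.
have DS : (D <= S)%VS by apply: brspace_sub.
have Dc : forall a b, a \in D -> b \in D -> comm a b \in D.
  by move=> a b Ha Hb; apply: brspace_mem; [apply: comm_bilin|apply: (subvP DS)..].
have Dk : derived (@comm F n) D k = 0%VS by rewrite derived_shift.
have [|w0 [w0nz w0W Hw0]] := IH D Dc Dk Wnz.
  by move=> s sD; apply: Ws; apply: (subvP DS).
set lm := lam w0.
pose Wl := (W :&: \bigcap_(i < \dim D) kermx ((vbasis D)`_i - (lm (vbasis D)`_i)%:M))%MS.
have WlP : forall u : 'rV_n, (u <= Wl)%MS <->
    ((u <= W)%MS /\ forall b, b \in (vbasis D : seq _) -> u *m b = lm b *: u).
  move=> u; rewrite sub_capmx; split.
    case/andP => uW /sub_bigcapmxP H; split => // b /in_vbasis [i ->].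
    by have := H i isT; rewrite sub_kermx mulmxBr mul_mx_scalar subr_eq0 => /eqP.
  case=> uW H; rewrite uW; apply/sub_bigcapmxP => i _.
  rewrite sub_kermx mulmxBr mul_mx_scalar subr_eq0 H //.
  by apply: mem_nth; rewrite size_tuple.
have Hall : forall u : 'rV_n, (u <= Wl)%MS -> forall d, d \in D -> u *m d = lm d *: u.
  move=> u /WlP [uW Hu] d dD.
  suff : u *m d = lm d *: u /\ w0 *m d = lm d *: w0 by case.
  move: d dD; apply: vspace_ind.
  - by rewrite /lm lam0 // !mulmx0 !scale0r.
  - move=> a x y [Hx1 Hx2] [Hy1 Hy2].
    have E : w0 *m (a *: x + y) = (a * lm x + lm y) *: w0.
      by rewrite mulmxDr -scalemxAr Hx2 Hy2 scalerA scalerDl.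
    rewrite /lm E (lam_eq w0nz E); split => //.
    by rewrite mulmxDr -scalemxAr Hx1 Hy1 scalerA scalerDl.
  - move=> x xb; split; first exact: Hu.
    by apply: Hw0; apply: vbasis_mem.
have w0Wl : (w0 <= Wl)%MS.
  by apply/WlP; split => // b bD; apply: Hw0; apply: vbasis_mem.
have Wlnz : Wl != 0.
  by apply: contraNneq w0nz => W0; rewrite -submx0 -W0.
have Wls : forall s, s \in S -> stablemx Wl s.
  move=> s sS; apply: stableP => u uWl.
  have [uW _] := (WlP u).1 uWl.
  apply/WlP; split; first exact: stable_vec (Ws _ sS) uW.
  move=> b bD; have bD' : b \in D by apply: vbasis_mem.
  have E : s *m b = b *m s + comm s b by rewrite /comm addrC subrK.
  have csb : comm s b \in D.
    by apply: brspace_mem; [apply: comm_bilin| |apply: (subvP DS)].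
  rewrite -mulmxA E mulmxDr mulmxA (Hall u uWl b bD') (Hall u uWl _ csb).
  rewrite /lm (inv_core char0 (K := D) w0nz) ?scale0r ?addr0 ?scalemxAl //.
  by move=> d dD; apply: brspace_mem; [apply: comm_bilin| |apply: (subvP DS)].
have Wlc : forall s t (u : 'rV_n), s \in S -> t \in S -> (u <= Wl)%MS ->
    u *m s *m t = u *m t *m s.
  move=> s t u sS tS uWl.
  have cst : comm s t \in D by apply: brspace_mem => //; apply: comm_bilin.
  have mu0 : lm (comm s t) = 0.
    apply: (tr_arg char0 (m := 1%N) Wlnz (Wls _ sS) (Wls _ tS)).
    rewrite expr1; apply: kill_rows => v vWl.
    by rewrite mulmxBr mul_mx_scalar (Hall v vWl _ cst) subrr.
  have := Hall u uWl _ cst; rewrite mu0 scale0r /comm mulmxBr !mulmxA.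
  by move/eqP; rewrite subr_eq0 => /eqP.
have [||v [vnz vWl Hv]] := comm_family (xs := vbasis S) Wlnz.
- by move=> x xS; apply: Wls; apply: vbasis_mem.
- by move=> x y u xS yS uWl; apply: Wlc => //; apply: vbasis_mem.
exists v; split => //; first by have [] := (WlP v).1 vWl.
move=> s sS.
suff [c vc] : exists c, v *m s = c *: v by rewrite vc (lam_eq vnz vc).
move: s sS; apply: vspace_ind.
- by exists 0; rewrite mulmx0 scale0r.
- move=> a x y [cx Hx] [cy Hy]; exists (a * cx + cy).
  by rewrite mulmxDr -scalemxAr Hx Hy scalerA scalerDl.
- exact: Hv.
Qed.

End Lie.


Section Gen2.
Variable F : fieldType.

Definition islin (U V : vectType F) (f : U -> V) :=
  forall (a : F) x y, f (a *: x + y) = a *: f x + f y.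

Lemma islin0 (U V : vectType F) (f : U -> V) : islin f -> f 0 = 0.
Proof. by move=> fl; have := fl (-1) 0 0; rewrite scaler0 addr0 scaleN1r addNr. Qed.

Lemma islinB (U V : vectType F) (f : U -> V) : islin f -> forall x y, f (x - y) = f x - f y.
Proof. by move=> fl x y; rewrite addrC -scaleN1r fl scaleN1r addrC. Qed.

Lemma img_in (U V : vectType F) (f : U -> V) (X : {vspace U}) x : islin f ->
  x \in X -> f x \in <<map f (vbasis X)>>%VS.
Proof.
move=> fl; move: x; apply: vspace_ind.
- by rewrite islin0 // mem0v.
- by move=> a x y Hx Hy; rewrite fl; apply: memvD => //; apply: memvZ.
by move=> x xb; apply: memv_span; apply: map_f.
Qed.

Lemma img_ex (U V : vectType F) (f : U -> V) (X : {vspace U}) y : islin f ->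
  y \in <<map f (vbasis X)>>%VS -> exists x, x \in X /\ y = f x.
Proof.
move=> fl; move: y; apply: span_ind.
- by exists 0; rewrite mem0v islin0.
- move=> a x y [x0 [Hx0 ->]] [y0 [Hy0 ->]]; exists (a *: x0 + y0).
  by rewrite fl; split => //; apply: memvD => //; apply: memvZ.
by move=> x /mapP [x0 Hx0 ->]; exists x0; split => //; apply: vbasis_mem.
Qed.

End Gen2.

Section Main.
Variable F : closedFieldType.
Hypothesis char0 : [pchar F] =i pred0.

Definition prodr n (ts : seq 'M[F]_n) : 'M_n := foldr (fun t M => M *m t) 1%:M ts.

Lemma quot n (Y : 'M[F]_n) : Y != 0 -> exists d', (d' < n)%N /\
  exists q : 'M_n -> 'M_d', [/\ islin q,
    (forall M N, stablemx Y M -> stablemx Y N -> q (M *m N) = q M *m q N),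
    q 1%:M = 1%:M &
    (forall M, stablemx Y M -> q M = 0 -> (M <= Y)%MS)].
Proof.
move=> Ynz.
set k := \rank Y; set C := (Y^C)%MS; set d' := \rank C.
have k0 : (0 < k)%N by rewrite lt0n mxrank_eq0.
have kn : (k <= n)%N by rewrite /k rank_leq_col.
exists d'; split; first by rewrite /d' mxrank_compl; rewrite ltn_subrL k0 (leq_trans k0 kn).
pose P := col_mx (row_base Y) (row_base C).
have rP : \rank P = n.
  rewrite /P -addsmxE (adds_eqmx (eq_row_base Y) (eq_row_base C)).
  by have := addsmx_compl_full Y => /eqnP.
have [P' P'P] : exists P', P' *m P = 1%:M by apply/row_fullP; rewrite /row_full rP.
have [P'' PP''] : exists P'', P *m P'' = 1%:M.
  by apply/row_freeP; rewrite /row_free rP /d' mxrank_compl subnKC.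
have PP' : P *m P' = 1%:M.
  suff -> : P' = P'' by [].
  by rewrite -[P']mulmx1 -PP'' mulmxA P'P mul1mx.
pose c M := P *m M *m P'.
have cM : forall M N, c (M *m N) = c M *m c N.
  by move=> M N; rewrite /c !mulmxA -(mulmxA _ P') P'P mulmx1.
have cur : forall M, stablemx Y M -> ursubmx (c M) = 0.
  move=> M sM.
  have sB : stablemx (row_base Y) M by rewrite stablemx_row_base.
  have U1 : usubmx (c M) = row_base Y *m M *m P' by rewrite /c -!mul_usub_mx /P col_mxKu.
  have U2 : row_base Y *m M = (row_base Y *m M *m pinvmx (row_base Y)) *m row_base Y.
    by rewrite mulmxKpV.
  have U3 : row_base Y *m P' = usubmx (1%:M : 'M_(k + d')).
    by rewrite -PP' -mul_usub_mx /P col_mxKu.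
  rewrite /ursubmx U1 U2 -mulmxA U3 -mulmx_rsub (scalar_mx_block k d').
  by rewrite -/(ursubmx _) block_mxKur mulmx0.
pose q M := drsubmx (c M).
exists q; split.
- move=> a M N; rewrite /q /c mulmxDr mulmxDl -scalemxAr -scalemxAl.
  by apply/matrixP => i j; rewrite !mxE.
- move=> M N sM sN; rewrite /q cM.
  by rewrite -[c M]submxK -[c N]submxK mulmx_block !block_mxKdr !cur // mulmx0 add0r.
- by rewrite /q /c mulmx1 PP' (scalar_mx_block k d') block_mxKdr.
move=> M sM qM0.
have PM : P *m M = c M *m P by rewrite /c -mulmxA P'P mulmx1.
rewrite -[M]mul1mx -P'P -mulmxA PM.
apply: submx_trans (submxMl _ _) _.
have qM : drsubmx (c M) = 0 by [].
rewrite -[c M]submxK cur // qM /P mul_block_col col_mx_sub !mul0mx !addr0.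
by apply/andP; split; apply: submx_trans (submxMl _ _) _; rewrite eq_row_base.
Qed.


Lemma weight_all n (D : {vspace 'M[F]_n}) (w0 u : 'rV_n) : w0 != 0 ->
  (forall d, d \in D -> w0 *m d = lam w0 d *: w0) ->
  (forall b, b \in (vbasis D : seq _) -> u *m b = lam w0 b *: u) ->
  forall d, d \in D -> u *m d = lam w0 d *: u.
Proof.
move=> w0nz Hw0 Hu d dD.
suff : u *m d = lam w0 d *: u /\ w0 *m d = lam w0 d *: w0 by case.
move: d dD; apply: vspace_ind.
- by rewrite lam0 // !mulmx0 !scale0r.
- move=> a x y [Hx1 Hx2] [Hy1 Hy2].
  have E : w0 *m (a *: x + y) = (a * lam w0 x + lam w0 y) *: w0.
    by rewrite mulmxDr -scalemxAr Hx2 Hy2 scalerA scalerDl.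
  rewrite E (lam_eq w0nz E); split => //.
  by rewrite mulmxDr -scalemxAr Hx1 Hy1 scalerA scalerDl.
- move=> x xb; split; first exact: Hu.
  by apply: Hw0; apply: vbasis_mem.
Qed.

Definition Ysp n (S : {vspace 'M[F]_n}) (w0 : 'rV_n) : 'M_n :=
  (\bigcap_(i < \dim S) kermx ((vbasis S)`_i - (lam w0 (vbasis S)`_i)%:M))%MS.

Lemma YspP n (S : {vspace 'M[F]_n}) (w0 u : 'rV_n) :
  (u <= Ysp S w0)%MS <-> forall b, b \in (vbasis S : seq _) -> u *m b = lam w0 b *: u.
Proof.
split.
  move=> /sub_bigcapmxP H b /in_vbasis [i ->].
  by have := H i isT; rewrite sub_kermx mulmxBr mul_mx_scalar subr_eq0 => /eqP.
move=> H; apply/sub_bigcapmxP => i _.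
rewrite sub_kermx mulmxBr mul_mx_scalar subr_eq0 H //.
by apply: mem_nth; rewrite size_tuple.
Qed.

Definition nilp n (T : {vspace 'M[F]_n}) m := forall ts : seq 'M_n,
  size ts = m -> all (fun t => t \in T) ts -> prodr ts = 0.

Lemma stable_prodr n (Y : 'M[F]_n) ts : all (fun t => stablemx Y t) ts ->
  stablemx Y (prodr ts).
Proof.
elim: ts => [|t ts IH] /=; first by rewrite mulmx1.
by case/andP => st sts; apply: conj_stable => //; apply: IH.
Qed.

Lemma main_lemma d : forall n, (n <= d)%N -> forall (A S : {vspace 'M[F]_n}) k,
  (forall a s, a \in A -> s \in S -> comm a s \in S) ->
  (forall s t, s \in S -> t \in S -> comm s t \in S) ->
  derived (@comm F n) S k = 0%VS ->
  exists m, nilp (brspace (@comm F n) A S) m.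
Proof.
elim: d => [|d IHd] n nd A S k HAS HSS Sk.
  have n0 : n = 0%N by apply/eqP; rewrite -leqn0.
  by subst n; exists 0%N => ts _ _; rewrite thinmx0.
case: n nd A S HAS HSS Sk => [|n] nd A S HAS HSS Sk.
  by exists 0%N => ts _ _; rewrite thinmx0.
have Wnz : (1%:M : 'M[F]_n.+1) != 0.
  by rewrite -mxrank_eq0 mxrank1.
have [w0 [w0nz _ Hw0]] := lie char0 HSS Sk Wnz (fun s _ => submx1 _).
set Y := Ysp S w0.
have Hall : forall u : 'rV_n.+1, (u <= Y)%MS -> forall s, s \in S ->
    u *m s = lam w0 s *: u.
  by move=> u /YspP Hu; apply: weight_all.
have YA : forall a, a \in A -> stablemx Y a.
  move=> a aA; apply: stableP => u uY; apply/YspP => b bS.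
  have bS' : b \in S by apply: vbasis_mem.
  have E : a *m b = b *m a + comm a b by rewrite /comm addrC subrK.
  rewrite -mulmxA E mulmxDr mulmxA (Hall u uY b bS') (Hall u uY _ (HAS _ _ aA bS')).
  by rewrite (inv_core char0 (K := S) w0nz) ?scale0r ?addr0 ?scalemxAl //;
    move=> s sS; apply: HAS.
have YS : forall s, s \in S -> stablemx Y s.
  by move=> s sS; apply: stableP => u uY; rewrite Hall //; apply: scalemx_sub.
have w0Y : (w0 <= Y)%MS by apply/YspP => b bS; apply: Hw0; apply: vbasis_mem.
have Ynz : Y != 0 by apply: contraNneq w0nz => Y0; rewrite -submx0 -Y0.
set T := brspace (@comm F n.+1) A S.
have YT : forall t, t \in T -> Y *m t = 0.
  move=> t tT; apply: kill_rows => u uY; move: t tT; apply: brspace_ind.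
  - by rewrite mulmx0.
  - by move=> a x y Hx Hy; rewrite mulmxDr -scalemxAr Hx Hy scaler0 addr0.
  move=> a s aA sS; rewrite (Hall u uY _ (HAS _ _ aA sS)).
  by rewrite (inv_core char0 (K := S) w0nz) ?scale0r //; move=> s' s'S; apply: HAS.
have [d' [d'n [q [ql qM q1 qK]]]] := quot Ynz.
set A' := <<map q (vbasis A)>>%VS; set S' := <<map q (vbasis S)>>%VS.
have qc : forall M N, stablemx Y M -> stablemx Y N -> q (comm M N) = comm (q M) (q N).
  by move=> M N sM sN; rewrite /comm (islinB ql) !qM.
have HAS' : forall a s, a \in A' -> s \in S' -> comm a s \in S'.
  move=> a s /(img_ex ql) [a0 [a0A ->]] /(img_ex ql) [s0 [s0S ->]].
  have h := (@img_in _ _ _ q _ _ ql (HAS _ _ a0A s0S)); rewrite -qc; [exact h|exact: YA|exact: YS].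
have HSS' : forall a s, a \in S' -> s \in S' -> comm a s \in S'.
  move=> a s /(img_ex ql) [a0 [a0A ->]] /(img_ex ql) [s0 [s0S ->]].
  have h := (@img_in _ _ _ q _ _ ql (HSS _ _ a0A s0S)); rewrite -qc; [exact h|exact: YS|exact: YS].
have DS := derived_sub HSS.
have Sder : forall j z, z \in derived (@comm F d') S' j ->
    exists y, y \in derived (@comm F n.+1) S j /\ z = q y.
  elim=> [|j IH] z /=; first exact: img_ex ql.
  move: z; apply: brspace_ind.
  - by exists 0; rewrite mem0v islin0.
  - move=> a x y [x0 [Hx0 ->]] [y0 [Hy0 ->]]; exists (a *: x0 + y0).
    by rewrite ql; split => //; apply: memvD => //; apply: memvZ.
  move=> x y /IH [x0 [Hx0 ->]] /IH [y0 [Hy0 ->]]; exists (comm x0 y0); split.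
    by apply: brspace_mem => //; apply: comm_bilin.
  by rewrite qc //; apply: YS; apply: (subvP (DS j)).
have Sk' : derived (@comm F d') S' k = 0%VS.
  apply/eqP; rewrite -subv0; apply/subvP => z /Sder [y [yD ->]].
  by move: yD; rewrite Sk memv0 => /eqP ->; rewrite islin0 // mem0v.
have [|m' Hm'] := IHd d' _ A' S' k HAS' HSS' Sk'.
  by rewrite -ltnS; apply: leq_trans d'n nd.
have qT : forall t, t \in T -> q t \in brspace (@comm F d') A' S'.
  apply: brspace_ind.
  - by rewrite islin0 // mem0v.
  - by move=> a x y Hx Hy; rewrite ql; apply: memvD => //; apply: memvZ.
  move=> a s aA sS.
  have h := @brspace_mem _ _ (@comm F d') A' S' (q a) (q s) (@comm_bilin F d')
    (@img_in _ _ _ q _ _ ql aA) (@img_in _ _ _ q _ _ ql sS).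
  rewrite qc; [exact h|exact: YA|exact: YS].
exists m'.+1 => [[|t ts]] //= [sz] /andP [tT tsT].
have sts : all (fun t => stablemx Y t) ts.
  by apply/allP => x xts; rewrite YT ?sub0mx //; apply: (allP tsT).
have qp : q (prodr ts) = prodr (map q ts).
  elim: ts {sz tsT} sts => [|x xs IH] /=; first by move=> _; exact q1.
  by case/andP => sx sxs; rewrite qM ?IH //; apply: stable_prodr.
have : prodr (map q ts) = 0.
  apply: Hm'; first by rewrite size_map.
  by apply/allP => x /mapP [y yts ->]; apply: qT; apply: (allP tsT).
rewrite -qp => /qK; rewrite stable_prodr // => /(_ isT) /submxP [D ->].
by rewrite -mulmxA YT // mulmx0.
Qed.

End Main.

Import VectorInternalTheory.


Section Bridge.
Variable F : closedFieldType.
Variables (L V : vectType F) (br : L -> L -> L) (r : L -> V -> V).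
Hypothesis Hr1 : forall (a : F) (x y : L) (v : V), r (a *: x + y) v = a *: r x v + r y v.
Hypothesis Hr2 : forall (x : L) (a : F) (u w : V), r x (a *: u + w) = a *: r x u + r x w.
Hypothesis Hbr : forall (x y : L) (v : V), r (br x y) v = r y (r x v) - r x (r y v).

Lemma islin_sum (U W : vectType F) (f : U -> W) m (c : 'I_m -> F) (e : 'I_m -> U) :
  islin f -> f (\sum_(i < m) c i *: e i) = \sum_(i < m) c i *: f (e i).
Proof.
move=> fl.
have f0 := islin0 fl.
have fD : forall x y, f (x + y) = f x + f y by move=> x y; rewrite -[x in LHS]scale1r fl scale1r.
rewrite (big_morph f fD f0); apply: eq_bigr => i _.
by rewrite -[c i *: e i]addr0 fl f0 addr0.
Qed.

Definition rho (x : L) : 'M[F]_(dim V) :=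
  \matrix_(i, j) (v2r (r x (r2v (delta_mx 0 i : 'rV_(dim V))))) 0 j.

Lemma rho_act x v : v2r (r x v) = v2r v *m rho x.
Proof.
pose f u := v2r (r x (r2v u)).
have fl : islin f by move=> a u w; rewrite /f linearP Hr2 linearP.
rewrite -{1}(v2rK v); set u := v2r v.
have -> : v2r (r x (r2v u)) = f (\sum_(j < dim V) u 0 j *: delta_mx 0 j).
  by rewrite -row_sum_delta.
rewrite (islin_sum _ _ fl); apply/rowP => j; rewrite summxE mxE.
by apply: eq_bigr => i _; rewrite !mxE.
Qed.

Lemma rho_lin : islin rho.
Proof. by move=> a x y; apply/matrixP => i j; rewrite !mxE Hr1 linearP !mxE. Qed.

Lemma rho_br x y : rho (br x y) = comm (rho x) (rho y).
Proof.
apply/row_matrixP => i; rewrite !rowE.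
set u := delta_mx 0 i.
rewrite -(r2vK u) -rho_act Hbr linearB /= /comm mulmxBr !mulmxA.
by rewrite -!rho_act.
Qed.

End Bridge.

Unset Implicit Arguments.


Theorem proposition4p2 (F : closedFieldType) (L : vectType F)
    (br : L -> L -> L) (V : vectType F) (l r : L -> V -> V) (R : {vspace L}) :
  [pchar F] =i pred0 ->
  is_leibniz br -> is_rep br l r -> is_radical br R ->
  exists m : nat, (1 <= m)%N /\
    rpow_zero r (brspace br R fullv + brspace br fullv R)%VS m.
Proof.
move=> char0 [Hb1 Hb2 _] [[_ Hr1 _ Hr2] [Hbr _ _]] [[RI1 RI2] [mR Rm] _].
have brb : bilin br by split.
set rh := rho r.
have rl : islin rh := rho_lin Hr1.
have rb : forall x y, rh (br x y) = comm (rh x) (rh y) := rho_br Hr2 Hbr.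
set A := <<map rh (vbasis (fullv : {vspace L}))>>%VS.
set S := <<map rh (vbasis R)>>%VS.
have RR : forall x y, x \in R -> br x y \in R.
  by move=> x y xR; apply: (subvP RI1); apply: brspace_mem => //; apply: memvf.
have RL : forall x y, y \in R -> br x y \in R.
  by move=> x y yR; apply: (subvP RI2); apply: brspace_mem => //; apply: memvf.
have HAS : forall a s, a \in A -> s \in S -> comm a s \in S.
  move=> a s /(img_ex rl) [x [_ ->]] /(img_ex rl) [y [yR ->]].
  by rewrite -rb; exact: (@img_in _ _ _ rh _ _ rl (RL x y yR)).
have HSS : forall a s, a \in S -> s \in S -> comm a s \in S.
  move=> a s /(img_ex rl) [x [xR ->]] /(img_ex rl) [y [yR ->]].
  by rewrite -rb; exact: (@img_in _ _ _ rh _ _ rl (RR x y xR)).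
have Sder : forall j z, z \in derived (@comm F _) S j ->
    exists y, y \in derived br R j /\ z = rh y.
  elim=> [|j IH] z /=; first exact: img_ex rl.
  move: z; apply: brspace_ind.
  - by exists 0; rewrite mem0v islin0.
  - move=> a x y [x0 [Hx0 ->]] [y0 [Hy0 ->]]; exists (a *: x0 + y0).
    by rewrite rl; split => //; apply: memvD => //; apply: memvZ.
  move=> x y /IH [x0 [Hx0 ->]] /IH [y0 [Hy0 ->]]; exists (br x0 y0); split.
    by apply: brspace_mem.
  by rewrite rb.
have Sk : derived (@comm F _) S mR = 0%VS.
  apply/eqP; rewrite -subv0; apply/subvP => z /Sder [y [yD ->]].
  by move: yD; rewrite Rm memv0 => /eqP ->; rewrite islin0 // mem0v.
have [m0 Hm0] := main_lemma char0 (leqnn _) HAS HSS Sk.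
set T := brspace (@comm F _) A S.
have BT : forall b, b \in (brspace br R fullv + brspace br fullv R)%VS -> rh b \in T.
  move=> b /memv_addP [b1 Hb1' [b2 Hb2' ->]].
  rewrite -[b1]scale1r rl scale1r; apply: memvD.
    move: b1 Hb1'; apply: brspace_ind.
    - by rewrite islin0 // mem0v.
    - by move=> a x y Hx Hy; rewrite rl; apply: memvD => //; apply: memvZ.
    move=> x y xR _; rewrite rb.
    have -> : comm (rh x) (rh y) = - comm (rh y) (rh x) by rewrite /comm opprB.
    rewrite rpredN; apply: brspace_mem; first exact: comm_bilin.
      exact: (@img_in _ _ _ rh _ _ rl (memvf y)).
    exact: (@img_in _ _ _ rh _ _ rl xR).
  move: b2 Hb2'; apply: brspace_ind.
  - by rewrite islin0 // mem0v.
  - by move=> a x y Hx Hy; rewrite rl; apply: memvD => //; apply: memvZ.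
  move=> x y _ yR; rewrite rb; apply: brspace_mem; first exact: comm_bilin.
    exact: (@img_in _ _ _ rh _ _ rl (memvf x)).
  exact: (@img_in _ _ _ rh _ _ rl yR).
have Hc : forall s v, v2r (rcomp r s v) = v2r v *m prodr (map rh s).
  elim=> [|b s IH] v /=; first by rewrite mulmx1.
  by rewrite rho_act // IH mulmxA.
exists m0.+1; split => //.
move=> [|b s] //= [sz] /andP [bB sB] v.
have : v2r ((r b \o rcomp r s) v) = 0.
  have := Hc (b :: s) v; rewrite /= => ->.
  rewrite (Hm0 (map rh s)) ?size_map ?mul0mx ?mulmx0 //.
  by apply/allP => x /mapP [y ys ->]; apply: BT; apply: (allP sB).
by move=> /(congr1 r2v); rewrite v2rK linear0.
Qed.
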